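(* Let $(\Omega,T)$ be a minimal subshift over a finite alphabet $A$ such that no word in $L_5(\Omega)$ has repeated letters, and suppose the language $L(\Omega)$ is recursive. Then: (1) there is an algorithm which, given $w,v\in L(\Omega)$ and $i,j\in\mathbb Z$, decides whether $(v,j)\subseteq(w,i)$; (2) there is an algorithm which, given $w,v\in L(\Omega)$ and $i,j\in\mathbb Z$, decides whether $(w,i)$ and $(v,j)$ are $3$-disjoint; (3) for every $w\in L(\Omega)$ and $i\in\mathbb Z$, the set of cylinder partitions of $(w,i)$ is a recursive subset of $\mathcal{FS}(A^*\times\mathbb Z)$, the set of all finite subsets of $A^*\times\mathbb Z$.
   Context: $T$ is the left shift $(T\omega)_m=\omega_{m+1}$ on $A^{\mathbb Z}$; a minimal subshift is a closed shift-invariant $\Omega\subseteq A^{\mathbb Z}$ with every orbit dense. $A^*$ is the set of nonempty finite words over $A$, indexed from $0$: $w=w_0\cdots w_{|w|-1}$. $L_m(\Omega)$ is the set of words of length $m$ occurring in sequences of $\Omega$ and $L(\Omega)=\bigcup_m L_m(\Omega)$; it is recursive if membership is algorithmically decidable. For a word $v$ and $i\in\mathbb Z$, $(v,i)=\{\omega\in\Omega:\omega_{k-i}=v_k,\ 0\leq k\leq|v|-1\}$. A finite set $S\subseteq A^*\times\mathbb Z$ is a cylinder partition of $(w,i)$ if the sets $(s,k)$, $(s,k)\in S$, are cylinder sets (with $s\in L(\Omega)$) that are pairwise disjoint and have union $(w,i)$. Two clopen sets $U,V$ are $3$-disjoint if $(U\cup TU\cup T^2U)\cap(V\cup TV\cup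 T^2V)=\emptyset$. *)

(* Defs.v *)
From mathcomp Require Import all_boot all_order all_algebra.
Set Implicit Arguments. Unset Strict Implicit. Unset Printing Implicit Defensive.
Import Order.TTheory GRing.Theory Num.Theory.
Local Open Scope ring_scope.

(* Model of computation: Kleene mu-recursive functions nat -> nat,    *)
(* unary, with a bijective pairing nat * nat <-> nat.                  *)

(* bijection nat*nat -> nat : (a,b) |-> 2^a (2b+1) - 1 *)
Definition npair (a b : nat) : nat := (2 ^ a * (b.*2).+1).-1.
Definition nfst (z : nat) : nat := logn 2 z.+1.
Definition nsnd (z : nat) : nat := ((z.+1 %/ 2 ^ nfst z)./2)%N.

Inductive rf : Type :=
| rZero : rf
| rSucc : rf
| rId : rf
| rFst : rf
| rSnd : rf
| rComp : rf -> rf -> rf     (* rComp f g : x |-> f (g x) *)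
| rPair : rf -> rf -> rf
| rPrec : rf -> rf -> rf     (* primitive recursion on the second component *)
| rMin : rf -> rf.           (* rMin f : x |-> least n with f (npair x n) = 0 *)

Inductive eval : rf -> nat -> nat -> Prop :=
| ev_zero x : eval rZero x 0
| ev_succ x : eval rSucc x x.+1
| ev_id x : eval rId x x
| ev_fst x : eval rFst x (nfst x)
| ev_snd x : eval rSnd x (nsnd x)
| ev_comp f g x y z : eval g x y -> eval f y z -> eval (rComp f g) x z
| ev_pair f g x a b : eval f x a -> eval g x b -> eval (rPair f g) x (npair a b)
| ev_prec0 f g a y : eval f a y -> eval (rPrec f g) (npair a 0) y
| ev_precS f g a n y y' :
    eval (rPrec f g) (npair a n) y ->
    eval g (npair a (npair n y)) y' ->
    eval (rPrec f g) (npair a n.+1) y'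
| ev_min f x n :
    eval f (npair x n) 0 ->
    (forall m, (m < n)%N -> exists k, eval f (npair x m) k.+1) ->
    eval (rMin f) x n.

Definition decides_at (c : rf) (x : nat) (P : Prop) : Prop :=
  (P -> eval c x 1) /\ (~ P -> eval c x 0).

Definition code_int (z : int) : nat :=
  match z with Posz n => n.*2 | Negz n => (n.*2).+1 end.

Fixpoint code_word (A : finType) (w : seq A) : nat :=
  match w with
  | [::] => 0
  | a :: w' => (npair (nat_of_ord (enum_rank a)) (code_word w')).+1
  end.

Definition code_wi (A : finType) (p : seq A * int) : nat :=
  npair (code_word p.1) (code_int p.2).

(* finite subsets of A^* x Z are presented by lists enumerating them *)
Fixpoint code_list (A : finType) (l : seq (seq A * int)) : nat :=
  match l with
  | [::] => 0
  | p :: l' => (npair (code_wi p) (code_list l')).+1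
  end.

Definition code_wivj (A : finType) (w : seq A) (i : int) (v : seq A) (j : int) : nat :=
  npair (code_word w) (npair (code_int i) (npair (code_word v) (code_int j))).

(* T^n : (T^n om)_m = om_(m+n); T is the left shift (T om)_m = om_(m+1) *)
Definition shiftn (A : Type) (n : int) (om : int -> A) : int -> A :=
  fun m => om (m + n).

(* closedness in the product topology of the discrete space A *)
Definition sclosed (A : finType) (Om : (int -> A) -> Prop) : Prop :=
  forall om : int -> A,
    (forall N : nat, exists eta, Om eta /\
        forall m : int, `|m| <= N%:Z -> eta m = om m) ->
    Om om.

Definition shift_invariant (A : finType) (Om : (int -> A) -> Prop) : Prop :=
  forall om : int -> A, Om (shiftn 1 om) <-> Om om.

(* every orbit {T^k om : k in Z} is dense in Om *)
Definition orbits_dense (A : finType) (Om : (int -> A) -> Prop) : Prop :=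
  forall om eta : int -> A, Om om -> Om eta ->
    forall N : nat, exists k : int,
      forall m : int, `|m| <= N%:Z -> shiftn k om m = eta m.

Definition minimal_subshift (A : finType) (Om : (int -> A) -> Prop) : Prop :=
  (exists om, Om om) /\ sclosed Om /\ shift_invariant Om /\ orbits_dense Om.

Definition occurs_at (A : finType) (w : seq A) (om : int -> A) (p : int) : Prop :=
  [seq om (p + k%:Z) | k <- iota 0 (size w)] = w.

Definition inLm (A : finType) (Om : (int -> A) -> Prop) (m : nat) (w : seq A) : Prop :=
  size w = m /\ exists om, Om om /\ exists p : int, occurs_at w om p.

(* L(Om): words of A^* (nonempty words) occurring in Om *)
Definition inL (A : finType) (Om : (int -> A) -> Prop) (w : seq A) : Prop :=
  exists m : nat, (0 < m)%N /\ inLm Om m w.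

(* the cylinder (v,i) = {om in Om : om_(k-i) = v_k, 0 <= k <= |v|-1} *)
Definition cyl (A : finType) (Om : (int -> A) -> Prop) (v : seq A) (i : int)
  : (int -> A) -> Prop :=
  fun om => Om om /\ occurs_at v om (- i).

Definition subsetP' (A : Type) (U V : A -> Prop) : Prop := forall x, U x -> V x.

Definition Timg (A : Type) (n : int) (U : (int -> A) -> Prop) : (int -> A) -> Prop :=
  fun om => exists u, U u /\ om = shiftn n u.

Definition T3 (A : Type) (U : (int -> A) -> Prop) : (int -> A) -> Prop :=
  fun om => U om \/ Timg 1 U om \/ Timg 2 U om.

Definition three_disjoint (A : Type) (U V : (int -> A) -> Prop) : Prop :=
  forall om, ~ (T3 U om /\ T3 V om).

Definition cylinder_partition (A : finType) (Om : (int -> A) -> Prop)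
    (w : seq A) (i : int) (l : seq (seq A * int)) : Prop :=
  (forall sk, sk \in l -> inL Om sk.1) /\
  (forall sk tk, sk \in l -> tk \in l -> sk != tk ->
      forall om, ~ (cyl Om sk.1 sk.2 om /\ cyl Om tk.1 tk.2 om)) /\
  (forall om, cyl Om w i om <-> exists2 sk, sk \in l & cyl Om sk.1 sk.2 om).

Definition recursive_language (A : finType) (Om : (int -> A) -> Prop) : Prop :=
  exists c : rf, forall w : seq A, decides_at c (code_word w) (inL Om w).

(* Main.v *)
Require Import Defs.
From mathcomp Require Import all_boot all_order all_algebra zify.
Import Order.TTheory GRing.Theory Num.Theory.
From Stdlib Require Import ClassicalEpsilon FunctionalExtensionality.
Set Implicit Arguments. Unset Strict Implicit.

Lemma npairS a b : (npair a b).+1 = 2 ^ a * (b.*2).+1.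
Proof. by rewrite /npair prednK // muln_gt0 expn_gt0. Qed.

Lemma nfst_pair a b : nfst (npair a b) = a.
Proof.
rewrite /nfst npairS mulnC logn_Gauss; last first.
  by rewrite coprime2n /= odd_double.
by rewrite pfactorK.
Qed.

Lemma nsnd_pair a b : nsnd (npair a b) = b.
Proof.
rewrite /nsnd nfst_pair npairS mulKn ?expn_gt0 //.
by rewrite /= uphalf_double.
Qed.

Lemma npair_surj z : npair (nfst z) (nsnd z) = z.
Proof.
rewrite /nsnd /nfst.
have [m cm E] := @pfactor_coprime 2 z.+1 isT isT.
have om : odd m by move: cm; rewrite coprime2n.
set e := logn 2 z.+1 in E *.
have -> : z.+1 %/ 2 ^ e = m by rewrite E mulnK ?expn_gt0.
rewrite /npair.
have -> : (m./2).*2.+1 = m by rewrite -{2}(odd_double_half m) om.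
by rewrite mulnC -E.
Qed.

Lemma npair_ge a b : a + b <= npair a b.
Proof.
rewrite -ltnS npairS.
have h : a < 2 ^ a by apply: ltn_expl.
have : a.+1 * (b.*2).+1 <= 2 ^ a * (b.*2).+1 by rewrite leq_mul2r h orbT.
rewrite -!muln2; nia.
Qed.

Lemma npair_inj a b c d : npair a b = npair c d -> a = c /\ b = d.
Proof. by move=> E; split; [rewrite -(nfst_pair a b) E nfst_pair | rewrite -(nsnd_pair a b) E nsnd_pair]. Qed.

Close Scope ring_scope.

Definition rcomp (f : nat -> nat) := exists c, forall x, eval c x (f x).

Lemma comp_ext f g : (forall x, f x = g x) -> rcomp f -> rcomp g.
Proof. by move=> E [c Hc]; exists c => x; rewrite -E. Qed.

Lemma comp_const k : rcomp (fun _ => k).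
Proof.
elim: k => [|k [c Hc]]; first by exists rZero => x; constructor.
exists (rComp rSucc c) => x; econstructor; [exact: Hc | constructor].
Qed.

Lemma comp_id : rcomp (fun x => x).
Proof. by exists rId => x; constructor. Qed.

Lemma comp_o f g : rcomp f -> rcomp g -> rcomp (fun x => f (g x)).
Proof. by move=> [cf Hf] [cg Hg]; exists (rComp cf cg) => x; econstructor; eauto. Qed.

Lemma comp_nfst f : rcomp f -> rcomp (fun x => nfst (f x)).
Proof. by move=> H; apply: (@comp_o nfst) H; exists rFst => x; constructor. Qed.

Lemma comp_nsnd f : rcomp f -> rcomp (fun x => nsnd (f x)).
Proof. by move=> H; apply: (@comp_o nsnd) H; exists rSnd => x; constructor. Qed.

Lemma comp_succ f : rcomp f -> rcomp (fun x => (f x).+1).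
Proof. by move=> H; apply: (@comp_o succn) H; exists rSucc => x; constructor. Qed.

Lemma comp_pair f g : rcomp f -> rcomp g -> rcomp (fun x => npair (f x) (g x)).
Proof. by move=> [cf Hf] [cg Hg]; exists (rPair cf cg) => x; constructor. Qed.

Lemma comp_app2 (h : nat -> nat -> nat) f g :
  rcomp (fun z => h (nfst z) (nsnd z)) -> rcomp f -> rcomp g -> rcomp (fun x => h (f x) (g x)).
Proof.
move=> H Hf Hg; have := comp_o H (comp_pair Hf Hg).
by apply: comp_ext => x; rewrite nfst_pair nsnd_pair.
Qed.

Lemma ev_fst' x y : nfst x = y -> eval rFst x y.
Proof. by move=> <-; constructor. Qed.
Lemma ev_snd' x y : nsnd x = y -> eval rSnd x y.
Proof. by move=> <-; constructor. Qed.

Lemma comp_iter (F : nat -> nat -> nat) N I :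
  rcomp (fun z => F (nfst z) (nsnd z)) -> rcomp N -> rcomp I ->
  rcomp (fun x => iter (N x) (F x) (I x)).
Proof.
move=> [cF HF] [cN HN] [cI HI].
pose g := rComp cF (rPair rFst (rComp rSnd rSnd)).
have Hg a n y : eval g (npair a (npair n y)) (F a y).
  have E : eval (rPair rFst (rComp rSnd rSnd)) (npair a (npair n y)) (npair a y).
    constructor; first by apply: ev_fst'; rewrite nfst_pair.
    by eapply ev_comp with (y := npair n y); apply: ev_snd'; rewrite ?nsnd_pair.
  by eapply ev_comp; [exact: E| have := HF (npair a y); rewrite nfst_pair nsnd_pair].
have Hp a n : eval (rPrec cI g) (npair a n) (iter n (F a) (I a)).
  elim: n => [|n IH]; first by constructor.
  by rewrite iterS; econstructor; [exact: IH | exact: Hg].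
exists (rComp (rPrec cI g) (rPair rId cN)) => x.
econstructor; first by constructor; [constructor | exact: HN].
exact: Hp.
Qed.

Lemma comp_add f g : rcomp f -> rcomp g -> rcomp (fun x => f x + g x).
Proof.
move=> Hf Hg; apply: (comp_app2 (h:=addn)) Hf Hg.
have := comp_iter (F := fun _ s => s.+1) (comp_succ (comp_nsnd comp_id))
  (comp_nsnd comp_id) (comp_nfst comp_id).
by apply: comp_ext => x; rewrite iter_succn.
Qed.

Lemma comp_pred f : rcomp f -> rcomp (fun x => (f x).-1).
Proof.
apply: comp_o.
have := comp_nfst (comp_iter (F := fun _ s => npair (nsnd s) (nsnd s).+1)
  (N := id) (I := fun _ => npair 0 0)
  (comp_pair (comp_nsnd (comp_nsnd comp_id)) (comp_succ (comp_nsnd (comp_nsnd comp_id))))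
  comp_id (comp_const _)).
apply: comp_ext => x /=.
suff -> : iter x (fun s => npair (nsnd s) (nsnd s).+1) (npair 0 0) = npair x.-1 x.
  by rewrite nfst_pair.
by elim: x => [//|x IH]; rewrite iterS IH nsnd_pair.
Qed.

Lemma comp_sub f g : rcomp f -> rcomp g -> rcomp (fun x => f x - g x).
Proof.
move=> Hf Hg; apply: (comp_app2 (h:=subn)) Hf Hg.
have := comp_iter (F := fun _ s => s.-1) (comp_pred (comp_nsnd comp_id))
  (comp_nsnd comp_id) (comp_nfst comp_id).
apply: comp_ext => x; elim: (nsnd x) => [|n IH]; first by rewrite subn0.
by rewrite iterS IH subnS.
Qed.

Lemma comp_mul f g : rcomp f -> rcomp g -> rcomp (fun x => f x * g x).
Proof.
move=> Hf Hg; apply: (comp_app2 (h:=muln)) Hf Hg.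
have := comp_iter (F := fun a s => s + nfst a)
  (comp_add (comp_nsnd comp_id) (comp_nfst (comp_nfst comp_id)))
  (comp_nsnd comp_id) (comp_const 0).
apply: comp_ext => x; elim: (nsnd x) => [|n IH]; first by rewrite muln0.
by rewrite iterS IH mulnS addnC.
Qed.

Lemma comp_eqn f g : rcomp f -> rcomp g -> rcomp (fun x => nat_of_bool (f x == g x)).
Proof.
move=> Hf Hg.
have := comp_sub (comp_const 1) (comp_add (comp_sub Hf Hg) (comp_sub Hg Hf)).
apply: comp_ext => x; case: eqP => [->|ne]; first by rewrite subnn.
apply/eqP; rewrite subn_eq0; lia.
Qed.

Lemma comp_leq f g : rcomp f -> rcomp g -> rcomp (fun x => nat_of_bool (f x <= g x)).
Proof.
move=> Hf Hg; have := comp_eqn (comp_sub Hf Hg) (comp_const 0).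
by apply: comp_ext => x; rewrite subn_eq0.
Qed.

Lemma comp_negb b : rcomp (fun x => nat_of_bool (b x)) -> rcomp (fun x => nat_of_bool (~~ b x)).
Proof. by move=> H; have := comp_sub (comp_const 1) H; apply: comp_ext => x; case: (b x). Qed.

Lemma comp_andb b c : rcomp (fun x => nat_of_bool (b x)) -> rcomp (fun x => nat_of_bool (c x)) ->
  rcomp (fun x => nat_of_bool (b x && c x)).
Proof. by move=> H1 H2; have := comp_mul H1 H2; apply: comp_ext => x; case: (b x); case: (c x). Qed.

Lemma comp_orb b c : rcomp (fun x => nat_of_bool (b x)) -> rcomp (fun x => nat_of_bool (c x)) ->
  rcomp (fun x => nat_of_bool (b x || c x)).
Proof.
move=> H1 H2; have := comp_negb (comp_andb (comp_negb H1) (comp_negb H2)).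
by apply: comp_ext => x; case: (b x); case: (c x).
Qed.

Lemma comp_implb b c : rcomp (fun x => nat_of_bool (b x)) -> rcomp (fun x => nat_of_bool (c x)) ->
  rcomp (fun x => nat_of_bool (b x ==> c x)).
Proof.
move=> H1 H2; have := comp_orb (comp_negb H1) H2.
by apply: comp_ext => x; case: (b x); case: (c x).
Qed.

Lemma comp_ite b f g : rcomp (fun x => nat_of_bool (b x)) -> rcomp f -> rcomp g ->
  rcomp (fun x => if b x then f x else g x).
Proof.
move=> Hb Hf Hg; have := comp_add (comp_mul Hb Hf) (comp_mul (comp_negb Hb) Hg).
by apply: comp_ext => x; case: (b x) => /=; rewrite ?mul1n ?mul0n ?addn0.
Qed.

Lemma comp_count (N : nat -> nat) (P : nat -> nat -> bool) :
  rcomp N -> rcomp (fun z => nat_of_bool (P (nfst z) (nsnd z))) ->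
  rcomp (fun x => count (P x) (iota 0 (N x))).
Proof.
move=> HN HP.
have HP' : rcomp (fun z => nat_of_bool (P (nfst z) (nfst (nsnd z)))).
  exact: (comp_app2 (h := fun a b => nat_of_bool (P a b)) HP (comp_nfst comp_id)
     (comp_nfst (comp_nsnd comp_id))).
have := comp_nsnd (comp_iter
  (F := fun x s => npair (nfst s).+1 (nsnd s + P x (nfst s)))
  (N := N) (I := fun _ => npair 0 0)
  (comp_pair (comp_succ (comp_nfst (comp_nsnd comp_id)))
     (comp_add (comp_nsnd (comp_nsnd comp_id)) HP')) HN (comp_const _)).
apply: comp_ext => x /=.
suff -> : forall n, iter n (fun s => npair (nfst s).+1 (nsnd s + P x (nfst s))) (npair 0 0)
   = npair n (count (P x) (iota 0 n)) by rewrite nsnd_pair.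
elim=> [//|n IH]; rewrite iterS IH nfst_pair nsnd_pair.
by rewrite -addn1 iotaD count_cat /= addn0 add0n.
Qed.

Lemma comp_all (N : nat -> nat) (P : nat -> nat -> bool) :
  rcomp N -> rcomp (fun z => nat_of_bool (P (nfst z) (nsnd z))) ->
  rcomp (fun x => nat_of_bool (all (P x) (iota 0 (N x)))).
Proof.
move=> HN HP; have := comp_eqn (comp_count HN HP) HN.
by apply: comp_ext => x; rewrite all_count size_iota.
Qed.

Lemma comp_has (N : nat -> nat) (P : nat -> nat -> bool) :
  rcomp N -> rcomp (fun z => nat_of_bool (P (nfst z) (nsnd z))) ->
  rcomp (fun x => nat_of_bool (has (P x) (iota 0 (N x)))).
Proof.
move=> HN HP; have := comp_negb (comp_eqn (comp_count HN HP) (comp_const 0)).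
by apply: comp_ext => x; rewrite has_count lt0n.
Qed.

Lemma comp_odd f : rcomp f -> rcomp (fun x => nat_of_bool (odd (f x))).
Proof.
move=> H; apply: (@comp_o (fun y => nat_of_bool (odd y))) H.
have := comp_iter (F := fun _ s => 1 - s) (N := id) (I := fun _ => 0)
  (comp_sub (comp_const 1) (comp_nsnd comp_id)) comp_id (comp_const 0).
apply: comp_ext => x /=; elim: x => [//|x IH]; rewrite iterS IH /=.
by case: (odd x).
Qed.

Lemma comp_half f : rcomp f -> rcomp (fun x => (f x)./2).
Proof.
move=> H; apply: (@comp_o (fun y => y./2)) H.
have := comp_nfst (comp_iter (F := fun _ s => npair (nfst s + nsnd s) (1 - nsnd s))
  (N := id) (I := fun _ => npair 0 0)
  (comp_pair (comp_add (comp_nfst (comp_nsnd comp_id)) (comp_nsnd (comp_nsnd comp_id)))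
    (comp_sub (comp_const 1) (comp_nsnd (comp_nsnd comp_id)))) comp_id (comp_const _)).
apply: comp_ext => x /=.
suff -> : iter x (fun s => npair (nfst s + nsnd s) (1 - nsnd s)) (npair 0 0)
   = npair x./2 (odd x) by rewrite nfst_pair.
elim: x => [//|x IH]; rewrite iterS IH nfst_pair nsnd_pair /=.
by rewrite uphalf_half addnC; case: (odd x).
Qed.

Ltac cauto := repeat (cbv beta; first [ apply comp_const | apply comp_id | apply comp_nfst
  | apply comp_nsnd | apply comp_succ | apply comp_pair | apply comp_add | apply comp_sub
  | apply comp_mul | apply comp_pred | apply comp_half | apply comp_odd | apply comp_eqn
  | apply comp_leq | apply comp_negb | apply comp_andb | apply comp_orb | apply comp_implb
  | apply comp_all | apply comp_has | apply comp_count | apply comp_iter | apply comp_ite ]).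

Close Scope ring_scope.

Definition tl y := nsnd y.-1.
Definition hd y := nfst y.-1.
Definition drp k y := iter k tl y.
Definition nthc k y := hd (drp k y).
Definition lenc y := count (fun k => drp k y != 0) (iota 0 y).
Definition validc nA y := all (fun k => (drp k y != 0) ==> (hd (drp k y) < nA)) (iota 0 y).
Definition fixc nA y := if validc nA y then y else 0.
Definition consc y d s := all (fun k => nthc (d + k) y == nthc k s) (iota 0 (lenc s)).
Definition Bn nA n := iter n (fun b => 2 ^ nA * (b.*2).+1) 0.
Definition offc M c := if odd c then M + c./2 + 1 else M - c./2.

Lemma comp_tl f : rcomp f -> rcomp (fun x => tl (f x)).
Proof. by move=> H; rewrite /tl; cauto. Qed.
Lemma comp_hd f : rcomp f -> rcomp (fun x => hd (f x)).
Proof. by move=> H; rewrite /hd; cauto. Qed.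
Lemma comp_drp f g : rcomp f -> rcomp g -> rcomp (fun x => drp (f x) (g x)).
Proof.
move=> Hf Hg; rewrite /drp.
apply: (comp_iter (F := fun _ s => tl s)) => //.
exact: comp_tl (comp_nsnd comp_id).
Qed.
Lemma comp_nthc f g : rcomp f -> rcomp g -> rcomp (fun x => nthc (f x) (g x)).
Proof. by move=> Hf Hg; apply: comp_hd; apply: comp_drp. Qed.
Lemma comp_lenc f : rcomp f -> rcomp (fun x => lenc (f x)).
Proof.
move=> H; rewrite /lenc.
apply: (comp_count (P := fun y k => drp k (f y) != 0)) => //.
by apply: comp_negb; apply: comp_eqn; [apply: comp_drp; cauto; apply: (comp_o H); cauto | cauto].
Qed.

Ltac cauto2 := repeat (cbv beta; first [ apply comp_tl | apply comp_hd | apply comp_drp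
  | apply comp_nthc | apply comp_lenc | apply comp_const | apply comp_id | apply comp_nfst
  | apply comp_nsnd | apply comp_succ | apply comp_pair | apply comp_add | apply comp_sub
  | apply comp_mul | apply comp_pred | apply comp_half | apply comp_odd | apply comp_eqn
  | apply comp_leq | apply comp_negb | apply comp_andb | apply comp_orb | apply comp_implb
  | apply comp_all | apply comp_has | apply comp_count | apply comp_iter | apply comp_ite
  | assumption ]).

Lemma comp_validc nA f : rcomp f -> rcomp (fun x => nat_of_bool (validc nA (f x))).
Proof.
move=> H; rewrite /validc.
apply: (comp_all (P := fun y k => (drp k (f y) != 0) ==> (hd (drp k (f y)) < nA))) => //.
have H' : rcomp (fun z => f (nfst z)) by apply: (comp_o H); cauto.
cauto2.
Qed.

Lemma comp_fixc nA f : rcomp f -> rcomp (fun x => fixc nA (f x)).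
Proof. by move=> H; rewrite /fixc; apply: comp_ite => //; [exact: comp_validc | cauto]. Qed.

Lemma comp_consc f g h : rcomp f -> rcomp g -> rcomp h ->
  rcomp (fun x => nat_of_bool (consc (f x) (g x) (h x))).
Proof.
move=> Hf Hg Hh; rewrite /consc.
apply: (comp_all (P := fun y k => nthc (g y + k) (f y) == nthc k (h y))); first by cauto2.
have H1 : rcomp (fun z => f (nfst z)) by apply: (comp_o Hf); cauto.
have H2 : rcomp (fun z => g (nfst z)) by apply: (comp_o Hg); cauto.
have H3 : rcomp (fun z => h (nfst z)) by apply: (comp_o Hh); cauto.
cauto2.
Qed.

Lemma comp_Bn nA f : rcomp f -> rcomp (fun x => Bn nA (f x)).
Proof.
move=> H; rewrite /Bn; apply: (comp_iter (F := fun _ b => 2 ^ nA * (b.*2).+1)); cauto2.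
have := comp_add (comp_nsnd comp_id) (comp_nsnd comp_id).
by apply: comp_ext => x; rewrite addnn.
Qed.

Lemma comp_offc f g : rcomp f -> rcomp g -> rcomp (fun x => offc (f x) (g x)).
Proof. by move=> Hf Hg; rewrite /offc; cauto2. Qed.

Lemma tl0 : tl 0 = 0.
Proof. by []. Qed.
Lemma hd0 : hd 0 = 0.
Proof. by []. Qed.
Lemma drp0 k : drp k 0 = 0.
Proof. by elim: k => //= k IH; rewrite IH tl0. Qed.

Lemma tl_code (A : finType) (a : A) w : tl (code_word (a :: w)) = code_word w.
Proof. by rewrite /tl /= nsnd_pair. Qed.
Lemma hd_code (A : finType) (a : A) w : hd (code_word (a :: w)) = enum_rank a.
Proof. by rewrite /hd /= nfst_pair. Qed.

Lemma drp_code (A : finType) k (w : seq A) : drp k (code_word w) = code_word (drop k w).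
Proof.
elim: w k => [|a w IH] k; first by rewrite drp0; case: k.
case: k => [//|k]; by rewrite /drp iterSr tl_code -/(drp k _) IH.
Qed.

Lemma code0 (A : finType) (w : seq A) : (code_word w == 0) = (w == [::]).
Proof. by case: w. Qed.

Lemma size_code (A : finType) (w : seq A) : size w <= code_word w.
Proof.
elim: w => //= a w IH; rewrite ltnS; apply: leq_trans IH _.
by apply: leq_trans (npair_ge _ _); apply: leq_addl.
Qed.

Lemma code_inj (A : finType) : injective (@code_word A).
Proof.
elim=> [|a w IH] [|b v] //= [] /npair_inj [/ord_inj/enum_rank_inj -> /IH ->] //.
Qed.

Lemma lenc_code (A : finType) (w : seq A) : lenc (code_word w) = size w.
Proof.
rewrite /lenc (eq_in_count (a2 := fun k => k < size w)); last first.
  move=> k _; rewrite drp_code code0 -size_eq0 size_drop subn_eq0 ltnNge //.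
have := size_code w; move: (code_word w) => N hN.
rewrite -(subnKC hN) iotaD count_cat.
rewrite (eq_in_count (a2 := predT)); last by move=> k; rewrite mem_iota.
rewrite count_predT size_iota add0n (eq_in_count (a2 := pred0)) ?count_pred0 ?addn0 //.
by move=> k; rewrite mem_iota => /andP [h _]; apply/negbTE; rewrite -leqNgt; lia.
Qed.

Lemma nthc_code (A : finType) k (w : seq A) x0 :
  k < size w -> nthc k (code_word w) = enum_rank (nth x0 w k).
Proof. by move=> hk; rewrite /nthc drp_code (drop_nth x0 hk) hd_code. Qed.

Lemma consc_code (A : finType) (u s : seq A) d : d + size s <= size u ->
  consc (code_word u) d (code_word s) = (take (size s) (drop d u) == s).
Proof.
move=> hs; rewrite /consc lenc_code.
case E0: s => [|x0 s']; first by rewrite take0.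
rewrite -E0; clear E0.
apply/allP/eqP => [H|E].
  apply: (@eq_from_nth _ x0); first by rewrite size_take size_drop; apply/minn_idPl; lia.
  move=> k; rewrite size_take size_drop => hk.
  have hk' : k < size s by move: hk; rewrite /minn; case: ifP; lia.
  have := H k; rewrite mem_iota add0n hk' /= !(nthc_code x0) //; last by lia.
  move=> /(_ isT) /eqP E'; rewrite nth_take // nth_drop.
  by apply: enum_rank_inj; apply: ord_inj.
move=> k; rewrite mem_iota add0n /= => hk.
rewrite !(nthc_code x0) //; last by lia.
by rewrite -[in X in _ == X]E nth_take // nth_drop.
Qed.

Lemma valid_code (A : finType) (w : seq A) : validc #|A| (code_word w).
Proof.
apply/allP => k _; rewrite drp_code; apply/implyP.
by case: (drop k w) => [|a v] //= _; rewrite /hd /= nfst_pair ltn_ord.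
Qed.

Lemma tl_lt y : 0 < y -> tl y < y.
Proof.
move=> hy; rewrite /tl; apply: (@leq_trans (y.-1).+1); last by rewrite prednK.
by rewrite ltnS -{2}(npair_surj y.-1); apply: leq_trans (npair_ge _ _); apply: leq_addl.
Qed.

Lemma validc_inv (A : finType) y : validc #|A| y -> exists w : seq A, code_word w = y.
Proof.
elim: y {-2}y (leqnn y) => [|N IH] y hy hv.
  by exists [::]; move: hy; rewrite leqn0 => /eqP ->.
case: (posnP y) => [->|y0]; first by exists [::].
have h0 : hd y < #|A|.
  by move/allP: hv => /(_ 0); rewrite mem_iota y0 /= -lt0n y0 /=; apply.
have hv' : validc #|A| (tl y).
  apply/allP => k; rewrite mem_iota /= => hk.
  have hk' : k.+1 < y by have := tl_lt y0; lia.
  have := (allP hv) k.+1; rewrite mem_iota /= hk'.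
  by rewrite /drp -iterSr; apply.
have [w' hw'] := IH (tl y) (ltac:(have := tl_lt y0; lia) : tl y <= N) hv'.
exists (enum_val (Ordinal h0) :: w') => /=.
rewrite enum_valK hw' /=; rewrite /hd /tl npair_surj prednK //.
Qed.

Lemma code_bound (A : finType) (w : seq A) : code_word w <= Bn #|A| (size w).
Proof.
elim: w => //= a w IH; rewrite npairS.
change (Bn #|A| (size w).+1) with (2 ^ #|A| * ((Bn #|A| (size w)).*2).+1).
apply: leq_mul; first by rewrite leq_pexp2l // ltnW.
by rewrite ltnS leq_double.
Qed.

Lemma enum_all (A : finType) n (P : nat -> bool) :
  all (fun y => (validc #|A| y && (lenc y == n)) ==> P y) (iota 0 (Bn #|A| n).+1) <->
  (forall w : seq A, size w = n -> P (code_word w)).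
Proof.
split=> [/allP H w hw|H].
  have := H (code_word w); rewrite mem_iota /= ltnS -hw code_bound valid_code lenc_code hw eqxx.
  by move=> /(_ isT).
apply/allP => y _; apply/implyP => /andP [/validc_inv [w <-]].
by rewrite lenc_code => /eqP /H.
Qed.

Lemma enum_has (A : finType) n (P : nat -> bool) :
  has (fun y => validc #|A| y && (lenc y == n) && P y) (iota 0 (Bn #|A| n).+1) <->
  (exists w : seq A, size w = n /\ P (code_word w)).
Proof.
split=> [/hasP [y _ /andP [/andP [/validc_inv [w <-]]]]|[w [hw Hw]]].
  by rewrite lenc_code => /eqP hw Hw; exists w.
apply/hasP; exists (code_word w).
  by rewrite mem_iota /= ltnS -hw code_bound.
by rewrite valid_code lenc_code hw eqxx.
Qed.

Close Scope ring_scope.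

Open Scope ring_scope.

Definition restrict (A : Type) (om : int -> A) (lo : int) (n : nat) :=
  [seq om (lo + k%:Z) | k <- iota 0 n].

Lemma shiftnS (A : Type) (k : int) (om : int -> A) : shiftn 1 (shiftn k om) = shiftn (k + 1) om.
Proof. by apply: functional_extensionality => m; rewrite /shiftn addrAC addrA. Qed.

Lemma shift_all (A : finType) (Om : (int -> A) -> Prop) : shift_invariant Om ->
  forall (k : int) om, Om om -> Om (shiftn k om).
Proof.
move=> SI k om H.
have Hp : forall n : nat, Om (shiftn n%:Z om).
  elim=> [|n IH].
    suff -> : shiftn 0 om = om by [].
    by apply: functional_extensionality => m; rewrite /shiftn addr0.
  by rewrite -(SI _) shiftnS in IH; rewrite -addn1 PoszD.
case: k => n; first exact: Hp.
elim: n => [|n IH].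
  by apply/SI; rewrite shiftnS; have -> : Negz 0 + 1 = 0%:Z by []; exact: (Hp 0%N).
apply/SI; rewrite shiftnS.
by have -> : Negz n.+1 + 1 = Negz n by rewrite !NegzE; lia.
Qed.

Lemma L_restrict (A : finType) (Om : (int -> A) -> Prop) om lo n :
  Om om -> (0 < n)%N -> inL Om (restrict om lo n).
Proof.
move=> H n0; exists n; split=> //; split; first by rewrite size_map size_iota.
exists om; split=> //; exists lo; by rewrite /occurs_at size_map size_iota.
Qed.

Lemma L_realize (A : finType) (Om : (int -> A) -> Prop) : shift_invariant Om ->
  forall u, inL Om u -> forall p, exists om, Om om /\ restrict om p (size u) = u.
Proof.
move=> SI u [m [_ [_ [om0 [H0 [p0 E]]]]]] p.
exists (shiftn (p0 - p) om0); split; first exact: shift_all.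
rewrite -{2}E /restrict /occurs_at; apply: eq_map => k.
by rewrite /shiftn; congr om0; lia.
Qed.

Lemma occurs_window (A : finType) (s : seq A) (om : int -> A) (lo : int) (d n : nat) :
  (d + size s <= n)%N ->
  occurs_at s om (lo + d%:Z) <-> take (size s) (drop d (restrict om lo n)) = s.
Proof.
move=> h; rewrite /restrict /occurs_at -map_drop -map_take drop_iota take_iota.
have -> : minn (size s) (n - d) = size s by apply/minn_idPl; lia.
rewrite add0n.
have -> : iota d (size s) = map (addn d) (iota 0 (size s)) by rewrite -iotaDl addn0.
suff -> : [seq om (lo + k%:Z) | k <- map (addn d) (iota 0 (size s))] =
  [seq om (lo + d%:Z + k%:Z) | k <- iota 0 (size s)] by [].
by rewrite -map_comp; apply: eq_map => k /=; rewrite PoszD addrA.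
Qed.

Lemma code_int_ge (k : int) : (absz k <= code_int k)%N.
Proof. by case: k => n /=; rewrite ?absz_nat ?NegzE ?abszN -?muln2; lia. Qed.

Lemma offc_spec (M : nat) (k : int) : (code_int k <= M)%N ->
  (offc M (code_int k))%:Z = M%:Z - k.
Proof.
case: k => n /=.
  rewrite /offc odd_double /= doubleK -!muln2 => h; lia.
rewrite /offc /= odd_double /= uphalf_double -!muln2 NegzE => h; lia.
Qed.

Lemma offc_le (M : nat) (k : int) (m : nat) : (code_int k + m <= M)%N ->
  (offc M (code_int k) + m <= M.*2)%N.
Proof.
case: k => n /=.
  rewrite /offc odd_double /= doubleK -!muln2 => h; lia.
rewrite /offc /= odd_double /= uphalf_double -!muln2 => h; lia.
Qed.

Lemma offc_ge (M : nat) (k : int) (a : nat) : (code_int k + a <= M)%N ->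
  (a <= offc M (code_int k))%N.
Proof.
case: k => n /=.
  rewrite /offc odd_double /= doubleK -!muln2 => h; lia.
rewrite /offc /= odd_double /= uphalf_double -!muln2 => h; lia.
Qed.

Close Scope ring_scope.

Open Scope ring_scope.

Definition pb (P : Prop) : bool := if excluded_middle_informative P then true else false.
Lemma pbP P : reflect P (pb P).
Proof. by rewrite /pb; case: excluded_middle_informative => h; constructor. Qed.

Definition Lbb (A : finType) (Om : (int -> A) -> Prop) (y : nat) : bool :=
  pb (exists u : seq A, code_word u = y /\ inL Om u).

Lemma Lbb_code (A : finType) (Om : (int -> A) -> Prop) u : Lbb Om (code_word u) <-> inL Om u.
Proof.
rewrite /Lbb; split => [/pbP [u' [/code_inj -> //]]|h].
by apply/pbP; exists u.
Qed.

Lemma comp_Lbb (A : finType) (Om : (int -> A) -> Prop) f : recursive_language Om -> rcomp f ->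
  rcomp (fun x => nat_of_bool (Lbb Om (fixc #|A| (f x)))).
Proof.
move=> [c Hc] Hf; apply: (@comp_o (fun y => nat_of_bool (Lbb Om (fixc #|A| y)))) Hf.
have [cf Hf'] := comp_fixc #|A| comp_id.
exists (rComp c cf) => x.
have [u hu] : exists u : seq A, code_word u = fixc #|A| x.
  rewrite /fixc; case: ifP => [/validc_inv //|_]; by exists [::].
eapply ev_comp; first exact: Hf'.
rewrite -hu; case: (Hc u) => h1 h2.
case E: (Lbb Om (code_word u)).
  by apply: h1; apply/Lbb_code; rewrite E.
by apply: h2 => /Lbb_code; rewrite E.
Qed.

Lemma size_restrict (A : Type) (om : int -> A) lo n : size (restrict om lo n) = n.
Proof. by rewrite size_map size_iota. Qed.

Lemma win_all (A : finType) (Om : (int -> A) -> Prop) lo n (Q : seq A -> Prop) :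
  shift_invariant Om -> (0 < n)%N ->
  (forall u, size u = n -> inL Om u -> Q u) <-> (forall om, Om om -> Q (restrict om lo n)).
Proof.
move=> SI n0; split=> [H om Hom|H u hu Lu].
  by apply: H; [exact: size_restrict | exact: L_restrict].
have [om [Hom E]] := L_realize SI Lu lo.
by have := H om Hom; rewrite -hu E.
Qed.

Lemma win_ex (A : finType) (Om : (int -> A) -> Prop) lo n (Q : seq A -> Prop) :
  shift_invariant Om -> (0 < n)%N ->
  (exists u, [/\ size u = n, inL Om u & Q u]) <-> (exists om, Om om /\ Q (restrict om lo n)).
Proof.
move=> SI n0; split=> [[u [hu Lu Qu]]|[om [Hom Q']]].
  have [om [Hom E]] := L_realize SI Lu lo.
  by exists om; split => //; rewrite -hu E.
exists (restrict om lo n); split=> //; [exact: size_restrict | exact: L_restrict].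
Qed.

Lemma cyl_win (A : finType) (Om : (int -> A) -> Prop) om (s : seq A) (k : int) (M : nat) :
  (code_int k + size s <= M)%N ->
  cyl Om s k om <-> Om om /\
    take (size s) (drop (offc M (code_int k)) (restrict om (- (M%:Z)) (M + M)%N)) = s.
Proof.
move=> h; rewrite /cyl -occurs_window; last by rewrite addnn offc_le.
rewrite offc_spec; last by lia.
by have -> : (- M%:Z + (M%:Z - k) = - k)%R by rewrite addrA addNr add0r.
Qed.

Lemma occ_shift (A : finType) (w : seq A) (a : int) (u : int -> A) (p : int) :
  occurs_at w (shiftn a u) p <-> occurs_at w u (p + a).
Proof.
rewrite /occurs_at.
suff -> : [seq shiftn a u (p + k%:Z) | k <- iota 0 (size w)] =
          [seq u (p + a + k%:Z) | k <- iota 0 (size w)] by [].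
by apply: eq_map => k; rewrite /shiftn addrAC.
Qed.

Lemma Timg_cyl (A : finType) (Om : (int -> A) -> Prop) (w : seq A) (i : int) (a : int) om :
  shift_invariant Om ->
  Timg a (cyl Om w i) om <-> Om om /\ occurs_at w om (- i - a).
Proof.
move=> SI; split=> [[u [[Hu Ou] ->]]|[Hom Oc]].
  split; first exact: shift_all.
  by rewrite occ_shift addrNK.
exists (shiftn (- a) om); split.
  split; first exact: shift_all.
  by rewrite occ_shift.
apply: functional_extensionality => m; rewrite /shiftn addrK //.
Qed.

Lemma T3_cyl (A : finType) (Om : (int -> A) -> Prop) (w : seq A) (i : int) om :
  shift_invariant Om ->
  T3 (cyl Om w i) om <-> exists2 a : nat, (a < 3)%N & Om om /\ occurs_at w om (- i - a%:Z).
Proof.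
move=> SI; rewrite /T3 !Timg_cyl //; split.
  case=> [[H1 H2]|[H|H]]; [exists 0%N | exists 1%N | exists 2%N] => //.
  by rewrite subr0.
case=> -[|[|[|a]]] // _ H; [left|right;left|right;right] => //.
by rewrite subr0 in H.
Qed.

Lemma drp_codel (A : finType) k (l : seq (seq A * int)) : drp k (code_list l) = code_list (drop k l).
Proof.
elim: l k => [|a l IH] k; first by rewrite drp0; case: k.
case: k => [//|k]; rewrite /drp iterSr -/(drp k _) -IH.
by rewrite /tl /= nsnd_pair.
Qed.

Lemma size_codel (A : finType) (l : seq (seq A * int)) : (size l <= code_list l)%N.
Proof.
elim: l => //= a l IH; rewrite ltnS; apply: leq_trans IH _.
by apply: leq_trans (npair_ge _ _); apply: leq_addl.
Qed.

Lemma lenc_codel (A : finType) (l : seq (seq A * int)) : lenc (code_list l) = size l.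
Proof.
rewrite /lenc (eq_in_count (a2 := fun k => (k < size l)%N)); last first.
  move=> k _; rewrite drp_codel; have := size_drop k l.
  case: (drop k l) => [|p l'] /= h; apply/esym; [apply/negbTE; rewrite -leqNgt|]; lia.
have := size_codel l; move: (code_list l) => N hN.
rewrite -(subnKC hN) iotaD count_cat.
rewrite (eq_in_count (a2 := predT)); last by move=> k; rewrite mem_iota.
rewrite count_predT size_iota (eq_in_count (a2 := pred0)) ?count_pred0 ?addn0 //.
by move=> k; rewrite mem_iota => /andP [h _]; apply/negbTE; rewrite -leqNgt; lia.
Qed.

Lemma elt_codel (A : finType) (l : seq (seq A * int)) t :
  (t < size l)%N -> hd (drp t (code_list l)) = code_wi (nth ([::], Posz 0) l t).
Proof.
move=> ht; rewrite drp_codel (drop_nth ([::], Posz 0) ht) /hd /= nfst_pair //.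
Qed.

Lemma codewi_le (A : finType) (l : seq (seq A * int)) t :
  (t < size l)%N -> (code_wi (nth ([::], Posz 0) l t) <= code_list l)%N.
Proof.
elim: l t => // p l IH [|t] /= ht; apply: leqW.
  by apply: leq_trans (npair_ge _ _); apply: leq_addr.
apply: leq_trans (IH t ht) _.
by apply: leq_trans (npair_ge _ _); apply: leq_addl.
Qed.

Lemma code_int_inj : injective code_int.
Proof.
move=> [n|n] [n'|n'] /= h; rewrite -!muln2 in h; try (congr _; lia); exfalso; lia.
Qed.

Lemma codewi_inj (A : finType) : injective (@code_wi A).
Proof.
move=> [s k] [s' k']; rewrite /code_wi /= => /npair_inj [/code_inj -> /code_int_inj ->] //.
Qed.

Lemma codewi_bound (A : finType) (p : seq A * int) : (code_int p.2 + size p.1 <= code_wi p)%N.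
Proof.
rewrite /code_wi addnC; apply: leq_trans (npair_ge _ _).
by rewrite leq_add2r size_code.
Qed.

Close Scope ring_scope.

Ltac cstep HL := cbv beta; lazymatch goal with
  | |- rcomp (fun _ => ?k) => apply (comp_const k)
  | |- rcomp (fun z => z) => apply comp_id
  | |- rcomp (fun z => nat_of_bool (@?a z && @?b z)) => apply (@comp_andb a b)
  | |- rcomp (fun z => nat_of_bool (@?a z || @?b z)) => apply (@comp_orb a b)
  | |- rcomp (fun z => nat_of_bool (@?a z ==> @?b z)) => apply (@comp_implb a b)
  | |- rcomp (fun z => nat_of_bool (~~ @?a z)) => apply (@comp_negb a)
  | |- rcomp (fun z => nat_of_bool (@?a z == @?b z)) => apply (@comp_eqn a b)
  | |- rcomp (fun z => nat_of_bool (@?a z <= @?b z)) => apply (@comp_leq a b)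
  | |- rcomp (fun z => nat_of_bool (odd (@?a z))) => apply (@comp_odd a)
  | |- rcomp (fun z => nat_of_bool (validc ?n (@?a z))) => apply (@comp_validc n a)
  | |- rcomp (fun z => nat_of_bool (consc (@?a z) (@?b z) (@?c z))) => apply (@comp_consc a b c)
  | |- rcomp (fun z => nat_of_bool (Lbb _ (fixc _ (@?a z)))) => apply (@comp_Lbb _ _ a HL)
  | |- rcomp (fun z => nat_of_bool (all (@?P z) (iota 0 (@?N z)))) => apply (@comp_all N P)
  | |- rcomp (fun z => nat_of_bool (has (@?P z) (iota 0 (@?N z)))) => apply (@comp_has N P)
  | |- rcomp (fun z => nfst (@?a z)) => apply (@comp_nfst a)
  | |- rcomp (fun z => nsnd (@?a z)) => apply (@comp_nsnd a)
  | |- rcomp (fun z => (@?a z).+1) => apply (@comp_succ a)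
  | |- rcomp (fun z => (@?a z) + (@?b z)) => apply (@comp_add a b)
  | |- rcomp (fun z => (@?a z) - (@?b z)) => apply (@comp_sub a b)
  | |- rcomp (fun z => (@?a z) * (@?b z)) => apply (@comp_mul a b)
  | |- rcomp (fun z => (@?a z).-1) => apply (@comp_pred a)
  | |- rcomp (fun z => (@?a z)./2) => apply (@comp_half a)
  | |- rcomp (fun z => npair (@?a z) (@?b z)) => apply (@comp_pair a b)
  | |- rcomp (fun z => fixc ?n (@?a z)) => apply (@comp_fixc n a)
  | |- rcomp (fun z => Bn ?n (@?a z)) => apply (@comp_Bn n a)
  | |- rcomp (fun z => offc (@?a z) (@?b z)) => apply (@comp_offc a b)
  | |- rcomp (fun z => tl (@?a z)) => apply (@comp_tl a)
  | |- rcomp (fun z => hd (@?a z)) => apply (@comp_hd a)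
  | |- rcomp (fun z => drp (@?a z) (@?b z)) => apply (@comp_drp a b)
  | |- rcomp (fun z => nthc (@?a z) (@?b z)) => apply (@comp_nthc a b)
  | |- rcomp (fun z => lenc (@?a z)) => apply (@comp_lenc a)
  end.
Ltac cauto3 HL := repeat (cstep HL).

Lemma cons_u (A : finType) (u s : seq A) (k : int) M :
  size u = (M + M)%N -> (code_int k + size s <= M)%N ->
  consc (code_word u) (offc M (code_int k)) (code_word s) =
  (take (size s) (drop (offc M (code_int k)) u) == s).
Proof. by move=> hu hk; rewrite consc_code // hu addnn offc_le. Qed.

Lemma inL_size (A : finType) (Om : (int -> A) -> Prop) w : inL Om w -> (0 < size w)%N.
Proof. by move=> [m [m0 [hs _]]]; rewrite hs. Qed.

Definition alg1 (A : finType) (Om : (int -> A) -> Prop) (x : nat) : bool :=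
  all (fun y => (validc #|A| y && (lenc y == x + x)) ==>
       ((Lbb Om (fixc #|A| y) && consc y (offc x (nsnd (nsnd (nsnd x)))) (nfst (nsnd (nsnd x))))
         ==> consc y (offc x (nfst (nsnd x))) (nfst x)))
     (iota 0 (Bn #|A| (x + x)).+1).

Lemma comp_alg1 (A : finType) (Om : (int -> A) -> Prop) :
  recursive_language Om -> rcomp (fun x => nat_of_bool (alg1 Om x)).
Proof. move=> HL; rewrite /alg1.
timeout 30 cauto3 HL. Qed.

Lemma wivj_facts (A : finType) (w v : seq A) (i j : int) :
  let x := code_wivj w i v j in
  [/\ nfst x = code_word w, nfst (nsnd x) = code_int i, nfst (nsnd (nsnd x)) = code_word v,
      nsnd (nsnd (nsnd x)) = code_int j &
      (code_int i + size w <= x) /\ (code_int j + size v <= x)].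
Proof.
rewrite /code_wivj !(nfst_pair, nsnd_pair); split=> //.
have h1 := npair_ge (code_word w) (npair (code_int i) (npair (code_word v) (code_int j))).
have h2 := npair_ge (code_int i) (npair (code_word v) (code_int j)).
have h3 := npair_ge (code_word v) (code_int j).
have := size_code w; have := size_code v; split; lia.
Qed.

Lemma alg1_spec (A : finType) (Om : (int -> A) -> Prop) (w v : seq A) (i j : int) :
  shift_invariant Om -> inL Om w -> inL Om v ->
  alg1 Om (code_wivj w i v j) <-> subsetP' (cyl Om v j) (cyl Om w i).
Proof.
move=> SI Lw Lv.
have [E1 E2 E3 E4 [bw bv]] := wivj_facts w v i j.
move: (code_wivj w i v j) E1 E2 E3 E4 bw bv => x E1 E2 E3 E4 bw bv.
have n0 : 0 < x + x by have := inL_size Lw; lia.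
rewrite /alg1 E1 E2 E3 E4 enum_all.
transitivity (forall u : seq A, size u = (x + x) -> inL Om u ->
   take (size v) (drop (offc x (code_int j)) u) = v ->
   take (size w) (drop (offc x (code_int i)) u) = w).
  split => H u hu; move: (H u hu); rewrite /fixc valid_code !cons_u //.
    by move=> /implyP h Lu tv; apply/eqP/h; rewrite tv eqxx andbT; apply/Lbb_code.
  by move=> h; apply/implyP => /andP [/Lbb_code Lu /eqP tv]; apply/eqP; exact: h.
rewrite (@win_all _ _ (- (x%:Z))%R _ (fun u => take (size v) (drop (offc x (code_int j)) u) = v ->
   take (size w) (drop (offc x (code_int i)) u) = w) SI n0).
split => H om.
  by move=> /(@cyl_win _ _ om _ _ _ bv) [Hom tv]; apply/(@cyl_win _ _ om _ _ _ bw); split=> //; exact: H.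
move=> Hom tv.
have : cyl Om v j om by apply/(@cyl_win _ _ om _ _ _ bv).
by move=> /H /(@cyl_win _ _ om _ _ _ bw) [].
Qed.

Lemma decides_from (g : nat -> bool) :
  rcomp (fun x => nat_of_bool (g x)) ->
  exists c, forall x (P : Prop), (g x <-> P) -> decides_at c x P.
Proof.
move=> [c Hc]; exists c => x P E; split => hP.
  by have := Hc x; have -> : g x by apply/E.
by have := Hc x; have -> : g x = false by apply/negbTE; apply/negP => /E.
Qed.

Lemma all_iota (P : pred nat) n : all P (iota 0 n) <-> (forall a, a < n -> P a).
Proof.
split=> [/allP H a ha|H]; first by apply: H; rewrite mem_iota.
by apply/allP => a; rewrite mem_iota => /andP [_ h]; apply: H.
Qed.

Lemma occ_win (A : finType) (om : int -> A) (s : seq A) (k : int) (M a : nat) :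
  (code_int k + size s + a <= M)%N ->
  occurs_at s om (- k - a%:Z)%R <->
  take (size s) (drop (offc M (code_int k) - a) (restrict om (- (M%:Z))%R (M + M))) = s.
Proof.
move=> h; rewrite -occurs_window; last first.
  have := @offc_le M k (size s) ltac:(lia); rewrite -addnn; lia.
have h1 := @offc_spec M k ltac:(lia).
have h2 := @offc_ge M k a ltac:(lia).
suff -> : (- k - a%:Z = - M%:Z + (offc M (code_int k) - a)%N%:Z)%R by [].
lia.
Qed.

Lemma cons_ua (A : finType) (u s : seq A) (k : int) M a :
  size u = (M + M)%N -> (code_int k + size s + a <= M)%N ->
  consc (code_word u) (offc M (code_int k) - a) (code_word s) =
  (take (size s) (drop (offc M (code_int k) - a) u) == s).
Proof.
move=> hu hk; rewrite consc_code // hu.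
have := @offc_le M k (size s) ltac:(lia); rewrite -addnn; lia.
Qed.

Definition alg2 (A : finType) (Om : (int -> A) -> Prop) (x : nat) : bool :=
  all (fun a => all (fun b => ~~ has (fun y =>
      validc #|A| y && (lenc y == (x + 2) + (x + 2)) &&
      (Lbb Om (fixc #|A| y) && consc y (offc (x + 2) (nfst (nsnd x)) - a) (nfst x)
        && consc y (offc (x + 2) (nsnd (nsnd (nsnd x))) - b) (nfst (nsnd (nsnd x)))))
    (iota 0 (Bn #|A| ((x + 2) + (x + 2))).+1)) (iota 0 3)) (iota 0 3).

Lemma comp_alg2 (A : finType) (Om : (int -> A) -> Prop) :
  recursive_language Om -> rcomp (fun x => nat_of_bool (alg2 Om x)).
Proof. move=> HL; rewrite /alg2; timeout 60 cauto3 HL. Qed.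

Lemma alg2_spec (A : finType) (Om : (int -> A) -> Prop) (w v : seq A) (i j : int) :
  shift_invariant Om -> inL Om w -> inL Om v ->
  alg2 Om (code_wivj w i v j) <-> three_disjoint (cyl Om w i) (cyl Om v j).
Proof.
move=> SI Lw Lv.
have [E1 E2 E3 E4 [bw bv]] := wivj_facts w v i j.
move: (code_wivj w i v j) E1 E2 E3 E4 bw bv => x E1 E2 E3 E4 bw bv.
have n0 : 0 < (x + 2) + (x + 2) by lia.
rewrite /alg2 E1 E2 E3 E4.
have key : forall a b, a < 3 -> b < 3 ->
  has (fun y => validc #|A| y && (lenc y == (x + 2) + (x + 2)) &&
      (Lbb Om (fixc #|A| y) && consc y (offc (x + 2) (code_int i) - a) (code_word w)
        && consc y (offc (x + 2) (code_int j) - b) (code_word v)))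
    (iota 0 (Bn #|A| ((x + 2) + (x + 2))).+1) <->
  exists om, Om om /\ (occurs_at w om (- i - a%:Z)%R /\ occurs_at v om (- j - b%:Z)%R).
  move=> a b ha hb.
  have bw' : code_int i + size w + a <= x + 2 by lia.
  have bv' : code_int j + size v + b <= x + 2 by lia.
  rewrite enum_has.
  transitivity (exists u, [/\ size u = (x + 2) + (x + 2), inL Om u &
      take (size w) (drop (offc (x + 2) (code_int i) - a) u) = w /\
      take (size v) (drop (offc (x + 2) (code_int j) - b) u) = v]).
    split=> [[u [hu]]|[u [hu Lu [t1 t2]]]].
      rewrite /fixc valid_code !cons_ua // => /andP [/andP [/Lbb_code Lu /eqP t1] /eqP t2].
      by exists u.
    exists u; split=> //.
    by rewrite /fixc valid_code !cons_ua // t1 t2 !eqxx !andbT; apply/Lbb_code.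
  rewrite (@win_ex _ _ (- ((x + 2)%:Z))%R _ (fun u =>
      take (size w) (drop (offc (x + 2) (code_int i) - a) u) = w /\
      take (size v) (drop (offc (x + 2) (code_int j) - b) u) = v) SI n0).
  split=> [[om [Hom [t1 t2]]]|[om [Hom [o1 o2]]]]; exists om.
    by rewrite (@occ_win _ om _ _ _ _ bw') (@occ_win _ om _ _ _ _ bv').
  by rewrite -(@occ_win _ om _ _ _ _ bw') -(@occ_win _ om _ _ _ _ bv').
rewrite all_iota.
transitivity (forall a b, a < 3 -> b < 3 ->
  ~ exists om, Om om /\ (occurs_at w om (- i - a%:Z)%R /\ occurs_at v om (- j - b%:Z)%R)).
  split=> [H a b ha hb|H a ha].
    move: (H a ha) => /all_iota /(_ b hb) /negP; by rewrite key.
  by apply/all_iota => b hb; apply/negP; rewrite key //; apply: H.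
split=> [H om [/(T3_cyl _ _ _ SI) [a ha [Hom o1]] /(T3_cyl _ _ _ SI) [b hb [_ o2]]]|H a b ha hb].
  by apply: (H a b ha hb); exists om.
move=> [om [Hom [o1 o2]]]; apply: (H om); split; apply/(T3_cyl _ _ _ SI).
  by exists a.
by exists b.
Qed.

Close Scope ring_scope.

Lemma inter2 (A : finType) (Om : (int -> A) -> Prop) M (s1 s2 : seq A) (k1 k2 : int) :
  shift_invariant Om -> 0 < M ->
  code_int k1 + size s1 <= M -> code_int k2 + size s2 <= M ->
  has (fun y => validc #|A| y && (lenc y == M + M) &&
      (Lbb Om (fixc #|A| y) && consc y (offc M (code_int k1)) (code_word s1)
        && consc y (offc M (code_int k2)) (code_word s2)))
    (iota 0 (Bn #|A| (M + M)).+1) <->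
  exists om, cyl Om s1 k1 om /\ cyl Om s2 k2 om.
Proof.
move=> SI M0 b1 b2.
have n0 : 0 < M + M by lia.
rewrite enum_has.
transitivity (exists u, [/\ size u = M + M, inL Om u &
    take (size s1) (drop (offc M (code_int k1)) u) = s1 /\
    take (size s2) (drop (offc M (code_int k2)) u) = s2]).
  split=> [[u [hu]]|[u [hu Lu [t1 t2]]]].
    rewrite /fixc valid_code !cons_u // => /andP [/andP [/Lbb_code Lu /eqP t1] /eqP t2].
    by exists u.
  exists u; split=> //.
  by rewrite /fixc valid_code !cons_u // t1 t2 !eqxx !andbT; apply/Lbb_code.
rewrite (@win_ex _ _ (- (M%:Z))%R _ (fun u =>
    take (size s1) (drop (offc M (code_int k1)) u) = s1 /\
    take (size s2) (drop (offc M (code_int k2)) u) = s2) SI n0).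
split=> [[om [Hom [t1 t2]]]|[om [c1 c2]]]; exists om.
  by split; apply/(@cyl_win _ _ om _ _ M).
move: c1 c2 => /(@cyl_win _ _ om _ _ M b1) [Hom t1] /(@cyl_win _ _ om _ _ M b2) [_ t2].
by [].
Qed.

Lemma sub2 (A : finType) (Om : (int -> A) -> Prop) M (s1 s2 : seq A) (k1 k2 : int) :
  shift_invariant Om -> 0 < M ->
  code_int k1 + size s1 <= M -> code_int k2 + size s2 <= M ->
  all (fun y => (validc #|A| y && (lenc y == M + M)) ==>
      ((Lbb Om (fixc #|A| y) && consc y (offc M (code_int k1)) (code_word s1))
        ==> consc y (offc M (code_int k2)) (code_word s2)))
    (iota 0 (Bn #|A| (M + M)).+1) <->
  subsetP' (cyl Om s1 k1) (cyl Om s2 k2).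
Proof.
move=> SI M0 b1 b2.
have n0 : 0 < M + M by lia.
rewrite enum_all.
transitivity (forall u : seq A, size u = (M + M) -> inL Om u ->
   take (size s1) (drop (offc M (code_int k1)) u) = s1 ->
   take (size s2) (drop (offc M (code_int k2)) u) = s2).
  split => H u hu; move: (H u hu); rewrite /fixc valid_code !cons_u //.
    by move=> /implyP h Lu tv; apply/eqP/h; rewrite tv eqxx andbT; apply/Lbb_code.
  by move=> h; apply/implyP => /andP [/Lbb_code Lu /eqP tv]; apply/eqP; exact: h.
rewrite (@win_all _ _ (- (M%:Z))%R _ (fun u => take (size s1) (drop (offc M (code_int k1)) u) = s1 ->
   take (size s2) (drop (offc M (code_int k2)) u) = s2) SI n0).
split => H om.
  by move=> /(@cyl_win _ _ om _ _ _ b1) [Hom tv]; apply/(@cyl_win _ _ om _ _ _ b2); split=> //; exact: H.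
move=> Hom tv.
have : cyl Om s1 k1 om by apply/(@cyl_win _ _ om _ _ _ b1).
by move=> /H /(@cyl_win _ _ om _ _ _ b2) [].
Qed.

Lemma cover2 (A : finType) (Om : (int -> A) -> Prop) M (w : seq A) (i : int) (l : seq (seq A * int)) :
  shift_invariant Om -> 0 < M ->
  code_int i + size w <= M ->
  (forall t, t < size l -> code_int (nth ([::], Posz 0) l t).2 + size (nth ([::], Posz 0) l t).1 <= M) ->
  all (fun y => (validc #|A| y && (lenc y == M + M)) ==>
      ((Lbb Om (fixc #|A| y) && consc y (offc M (code_int i)) (code_word w)) ==>
        has (fun t => consc y (offc M (code_int (nth ([::], Posz 0) l t).2))
                               (code_word (nth ([::], Posz 0) l t).1)) (iota 0 (size l))))
    (iota 0 (Bn #|A| (M + M)).+1) <->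
  (forall om, cyl Om w i om -> exists2 sk, sk \in l & cyl Om sk.1 sk.2 om).
Proof.
move=> SI M0 bw bl.
have n0 : 0 < M + M by lia.
set p0 := ([::], Posz 0).
rewrite enum_all.
transitivity (forall u : seq A, size u = (M + M) -> inL Om u ->
   take (size w) (drop (offc M (code_int i)) u) = w ->
   exists2 t, t < size l & take (size (nth p0 l t).1) (drop (offc M (code_int (nth p0 l t).2)) u)
      = (nth p0 l t).1).
  split => H u hu; move: (H u hu); rewrite /fixc valid_code !cons_u //.
    move=> /implyP h Lu tv.
    have /hasP [t] : has (fun t => consc (code_word u) (offc M (code_int (nth p0 l t).2))
         (code_word (nth p0 l t).1)) (iota 0 (size l)).
      by apply: h; rewrite tv eqxx andbT; apply/Lbb_code.
    rewrite mem_iota /= => ht; rewrite cons_u //; last exact: bl.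
    by move=> /eqP E; exists t.
  move=> h; apply/implyP => /andP [/Lbb_code Lu /eqP tv].
  have [t ht E] := h Lu tv.
  by apply/hasP; exists t; [rewrite mem_iota | rewrite cons_u //; [apply/eqP | exact: bl]].
rewrite (@win_all _ _ (- (M%:Z))%R _ (fun u => take (size w) (drop (offc M (code_int i)) u) = w ->
   exists2 t, t < size l & take (size (nth p0 l t).1) (drop (offc M (code_int (nth p0 l t).2)) u)
      = (nth p0 l t).1) SI n0).
split => H om.
  move=> /(@cyl_win _ _ om _ _ _ bw) [Hom tv].
  have [t ht E] := H om Hom tv.
  exists (nth p0 l t); first exact: mem_nth.
  by apply/(@cyl_win _ _ om _ _ _ (bl t ht)).
move=> Hom tv.
have : cyl Om w i om by apply/(@cyl_win _ _ om _ _ _ bw).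
move=> /H [sk /(nthP p0) [t ht <-]] /(@cyl_win _ _ om _ _ _ (bl t ht)) [_ E].
by exists t.
Qed.

Definition alg3 (A : finType) (Om : (int -> A) -> Prop) (cw ci cwi : nat) (x : nat) : bool :=
 [&& all (fun t => Lbb Om (fixc #|A| (nfst (hd (drp t x))))) (iota 0 (lenc x)),
  all (fun t1 => all (fun t2 => (hd (drp t1 x) != hd (drp t2 x)) ==> ~~ has (fun y =>
      validc #|A| y && (lenc y == (x + cwi) + (x + cwi)) &&
      (Lbb Om (fixc #|A| y) && consc y (offc (x + cwi) (nsnd (hd (drp t1 x)))) (nfst (hd (drp t1 x)))
        && consc y (offc (x + cwi) (nsnd (hd (drp t2 x)))) (nfst (hd (drp t2 x)))))
     (iota 0 (Bn #|A| ((x + cwi) + (x + cwi))).+1)) (iota 0 (lenc x))) (iota 0 (lenc x)),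
  all (fun t => all (fun y => (validc #|A| y && (lenc y == (x + cwi) + (x + cwi))) ==>
      ((Lbb Om (fixc #|A| y) && consc y (offc (x + cwi) (nsnd (hd (drp t x)))) (nfst (hd (drp t x))))
        ==> consc y (offc (x + cwi) ci) cw)) (iota 0 (Bn #|A| ((x + cwi) + (x + cwi))).+1))
     (iota 0 (lenc x))
 & all (fun y => (validc #|A| y && (lenc y == (x + cwi) + (x + cwi))) ==>
      ((Lbb Om (fixc #|A| y) && consc y (offc (x + cwi) ci) cw) ==>
        has (fun t => consc y (offc (x + cwi) (nsnd (hd (drp t x)))) (nfst (hd (drp t x))))
          (iota 0 (lenc x))))
    (iota 0 (Bn #|A| ((x + cwi) + (x + cwi))).+1)].

Lemma comp_alg3 (A : finType) (Om : (int -> A) -> Prop) cw ci cwi :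
  recursive_language Om -> rcomp (fun x => nat_of_bool (alg3 Om cw ci cwi x)).
Proof. move=> HL; rewrite /alg3; timeout 100 cauto3 HL. Qed.

Lemma alg3_spec (A : finType) (Om : (int -> A) -> Prop) (w : seq A) (i : int) l :
  shift_invariant Om -> inL Om w ->
  alg3 Om (code_word w) (code_int i) (code_wi (w, i)) (code_list l) <-> cylinder_partition Om w i l.
Proof.
move=> SI Lw.
set x := code_list l; set cwi := code_wi (w, i).
have hl : lenc x = size l by rewrite lenc_codel.
have he t : t < size l -> hd (drp t x) = npair (code_word (nth ([::], Posz 0) l t).1) (code_int (nth ([::], Posz 0) l t).2).
  by move=> ht; rewrite elt_codel.
have bl t : t < size l -> code_int (nth ([::], Posz 0) l t).2 + size (nth ([::], Posz 0) l t).1 <= x + cwi.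
  move=> ht; have := codewi_bound (nth ([::], Posz 0) l t); have := codewi_le ht; rewrite -/x ; lia.
have bw : code_int i + size w <= x + cwi by have := codewi_bound (w, i); rewrite -/cwi /=; lia.
have M0 : 0 < x + cwi by have := inL_size Lw; lia.
have Ca : all (fun t => Lbb Om (fixc #|A| (nfst (hd (drp t x))))) (iota 0 (lenc x)) <->
    (forall sk, sk \in l -> inL Om sk.1).
  rewrite hl all_iota; split=> [H sk /(nthP ([::], Posz 0)) [t ht <-]|H t ht].
    by have := H t ht; rewrite he // nfst_pair /fixc valid_code => /Lbb_code.
  by rewrite he // nfst_pair /fixc valid_code; apply/Lbb_code; apply: H; exact: mem_nth.
have Cb : all (fun t1 => all (fun t2 => (hd (drp t1 x) != hd (drp t2 x)) ==> ~~ has (fun y =>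
      validc #|A| y && (lenc y == (x + cwi) + (x + cwi)) &&
      (Lbb Om (fixc #|A| y) && consc y (offc (x + cwi) (nsnd (hd (drp t1 x)))) (nfst (hd (drp t1 x)))
        && consc y (offc (x + cwi) (nsnd (hd (drp t2 x)))) (nfst (hd (drp t2 x)))))
     (iota 0 (Bn #|A| ((x + cwi) + (x + cwi))).+1)) (iota 0 (lenc x))) (iota 0 (lenc x)) <->
    (forall sk tk, sk \in l -> tk \in l -> sk != tk ->
      forall om, ~ (cyl Om sk.1 sk.2 om /\ cyl Om tk.1 tk.2 om)).
  rewrite hl all_iota.
  have step t1 t2 : t1 < size l -> t2 < size l ->
     ((hd (drp t1 x) != hd (drp t2 x)) ==> ~~ has (fun y =>
      validc #|A| y && (lenc y == (x + cwi) + (x + cwi)) &&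
      (Lbb Om (fixc #|A| y) && consc y (offc (x + cwi) (nsnd (hd (drp t1 x)))) (nfst (hd (drp t1 x)))
        && consc y (offc (x + cwi) (nsnd (hd (drp t2 x)))) (nfst (hd (drp t2 x)))))
     (iota 0 (Bn #|A| ((x + cwi) + (x + cwi))).+1)) <->
     (nth ([::], Posz 0) l t1 != nth ([::], Posz 0) l t2 -> forall om,
        ~ (cyl Om (nth ([::], Posz 0) l t1).1 (nth ([::], Posz 0) l t1).2 om /\ cyl Om (nth ([::], Posz 0) l t2).1 (nth ([::], Posz 0) l t2).2 om)).
    move=> h1 h2; rewrite !he // !nfst_pair !nsnd_pair.
    have -> : (npair (code_word (nth ([::], Posz 0) l t1).1) (code_int (nth ([::], Posz 0) l t1).2) !=
               npair (code_word (nth ([::], Posz 0) l t2).1) (code_int (nth ([::], Posz 0) l t2).2)) =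
              (nth ([::], Posz 0) l t1 != nth ([::], Posz 0) l t2).
      by apply/negb_inj; rewrite !negbK; apply/eqP/eqP => [/(@codewi_inj A)|->].
    split=> [/implyP H ne om [c1 c2]|H].
      by move: (H ne) => /negP; apply; apply/inter2 => //; [exact: bl | exact: bl | exists om].
    apply/implyP => ne; apply/negP => /inter2 [] //; try exact: bl.
    by move=> om; apply: H.
  split=> [H sk tk /(nthP ([::], Posz 0)) [t1 h1 <-] /(nthP ([::], Posz 0)) [t2 h2 <-]|H t1 h1].
    by apply/(step t1 t2 h1 h2); move: (H t1 h1) => /all_iota /(_ t2 h2).
  apply/all_iota => t2 h2; apply/(step t1 t2 h1 h2) => ne.
  by apply: H => //; exact: mem_nth.
have Cc : all (fun t => all (fun y => (validc #|A| y && (lenc y == (x + cwi) + (x + cwi))) ==>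
      ((Lbb Om (fixc #|A| y) && consc y (offc (x + cwi) (nsnd (hd (drp t x)))) (nfst (hd (drp t x))))
        ==> consc y (offc (x + cwi) (code_int i)) (code_word w)))
          (iota 0 (Bn #|A| ((x + cwi) + (x + cwi))).+1)) (iota 0 (lenc x)) <->
    (forall sk, sk \in l -> subsetP' (cyl Om sk.1 sk.2) (cyl Om w i)).
  rewrite hl all_iota; split=> [H sk /(nthP ([::], Posz 0)) [t ht <-]|H t ht].
    by apply/(@sub2 _ _ (x + cwi)) => //; [exact: bl| have := H t ht; rewrite he // nfst_pair nsnd_pair].
  rewrite he // nfst_pair nsnd_pair; apply/(@sub2 _ _ (x + cwi)) => //; first exact: bl.
  by apply: H; exact: mem_nth.
have Cd : all (fun y => (validc #|A| y && (lenc y == (x + cwi) + (x + cwi))) ==>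
      ((Lbb Om (fixc #|A| y) && consc y (offc (x + cwi) (code_int i)) (code_word w)) ==>
        has (fun t => consc y (offc (x + cwi) (nsnd (hd (drp t x)))) (nfst (hd (drp t x))))
          (iota 0 (lenc x))))
    (iota 0 (Bn #|A| ((x + cwi) + (x + cwi))).+1) <->
    (forall om, cyl Om w i om -> exists2 sk, sk \in l & cyl Om sk.1 sk.2 om).
  rewrite -(@cover2 _ _ _ _ _ l SI M0 bw bl) hl.
  suff E : forall y, has (fun t => consc y (offc (x + cwi) (nsnd (hd (drp t x)))) (nfst (hd (drp t x))))
          (iota 0 (size l)) =
     has (fun t => consc y (offc (x + cwi) (code_int (nth ([::], Posz 0) l t).2)) (code_word (nth ([::], Posz 0) l t).1))
          (iota 0 (size l)).
    by rewrite (eq_all (a2 := fun y => (validc #|A| y && (lenc y == (x + cwi) + (x + cwi))) ==>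
      ((Lbb Om (fixc #|A| y) && consc y (offc (x + cwi) (code_int i)) (code_word w)) ==>
        has (fun t => consc y (offc (x + cwi) (code_int (nth ([::], Posz 0) l t).2)) (code_word (nth ([::], Posz 0) l t).1))
          (iota 0 (size l))))) // => y; rewrite E.
  move=> y; apply: eq_in_has => t; rewrite mem_iota => /andP [_ ht].
  by rewrite he // nfst_pair nsnd_pair.
rewrite /alg3 -/x; split.
  move=> /and4P [/Ca a /Cb b /Cc c /Cd d]; split => //; split => // om; split; first exact: d.
  by move=> [sk hsk /(c sk hsk)].
move=> [a [b c]]; apply/and4P; split; [exact/Ca | exact/Cb | apply/Cc | apply/Cd].
  by move=> sk hsk om hom; apply/c; exists sk.
by move=> om /c.
Qed.

Close Scope ring_scope.

Local Open Scope ring_scope.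

Theorem proposition3p4 (A : finType) (Om : (int -> A) -> Prop) :
  minimal_subshift Om ->
  (forall w : seq A, inLm Om 5 w -> uniq w) ->
  recursive_language Om ->
  (exists c : rf, forall (w v : seq A) (i j : int), inL Om w -> inL Om v ->
      decides_at c (code_wivj w i v j) (subsetP' (cyl Om v j) (cyl Om w i)))
  /\
  (exists c : rf, forall (w v : seq A) (i j : int), inL Om w -> inL Om v ->
      decides_at c (code_wivj w i v j) (three_disjoint (cyl Om w i) (cyl Om v j)))
  /\
  (forall (w : seq A) (i : int), inL Om w ->
      exists c : rf, forall l : seq (seq A * int),
        decides_at c (code_list l) (cylinder_partition Om w i l)).
Proof.
move=> [_ [_ [SI _]]] _ HL.
split.
  have [c Hc] := decides_from (comp_alg1 HL).
  by exists c => w v i j Lw Lv; apply: Hc; apply: alg1_spec.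
split.
  have [c Hc] := decides_from (comp_alg2 HL).
  by exists c => w v i j Lw Lv; apply: Hc; apply: alg2_spec.
move=> w i Lw.
have [c Hc] := decides_from (comp_alg3 (code_word w) (code_int i) (code_wi (w, i)) HL).
by exists c => l; apply: Hc; apply: alg3_spec.
Qed.
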